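(* Let $\alpha>0$ and let $u$ be a sufficiently smooth solution of the $\alpha$--Euler equations with Dirichlet boundary condition on $\Omega$. Set $v=u-\alpha\Delta u$. Then for every $i\in\{1,\dots,N\}$ the circulation $\int_{\Gamma_i}v\cdot n^\perp$ of $v$ on $\Gamma_i$ is constant in time.
   Context: $\Omega\subset\mathbb R^2$ is a smooth bounded domain with $\partial\Omega=\Gamma\cup\Gamma_1\cup\dots\cup\Gamma_N$, where $\Gamma$ is the outer boundary component and $\Gamma_1,\dots,\Gamma_N$ are the inner components (smooth closed curves). $n$ is the outward unit normal and $n^\perp$ the unit tangent vector. The $\alpha$--Euler equations with Dirichlet boundary condition are $\partial_t(u-\alpha\Delta u)+u\cdot\nabla(u-\alpha\Delta u)+\sum_j(u-\alpha\Delta u)_j\nabla u_j=-\nabla\pi$, $\operatorname{div}u=0$ in $\Omega$, $u|_{\partial\Omega}=0$. *)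

(* Defs.v *)
From Stdlib Require Import Reals Lra List ClassicalEpsilon.
Open Scope R_scope.

(* Derivative of a one-variable function (the true derivative when it exists). *)
Definition derive (g : R -> R) (a : R) : R :=
  epsilon (inhabits 0) (fun l => derivable_pt_lim g a l).

Fixpoint dern (n : nat) (g : R -> R) : R -> R :=
  match n with O => g | S m => derive (dern m g) end.

Definition smooth1 (g : R -> R) : Prop :=
  forall n, forall a, exists l, derivable_pt_lim (dern n g) a l.

(* Riemann integral over [a,b] (the value when integrable). *)
Definition Rint (f : R -> R) (a b : R) : R :=
  epsilon (inhabits 0) (fun I => exists pr : Riemann_integrable f a b, RiemannInt pr = I).

(* Space-time scalar fields: f t x y, with (x,y) in R^2. *)
Definition field := R -> R -> R -> R.

(* partial derivatives: index 0 = time, 1 = x, 2 = y *)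
Definition pd (i : nat) (f : field) : field :=
  fun t x y => match i with
  | O => derive (fun s => f s x y) t
  | 1%nat => derive (fun s => f t s y) x
  | _ => derive (fun s => f t x s) y
  end.

Fixpoint pds (l : list nat) (f : field) : field :=
  match l with nil => f | i :: l' => pd i (pds l' f) end.

Definition continuous3 (f : field) : Prop :=
  forall t x y eps, eps > 0 -> exists delta, delta > 0 /\
    forall t' x' y', Rabs (t' - t) < delta -> Rabs (x' - x) < delta ->
      Rabs (y' - y) < delta -> Rabs (f t' x' y' - f t x y) < eps.

Definition smooth3 (f : field) : Prop :=
  forall l, continuous3 (pds l f) /\
   forall t x y,
     (exists a, derivable_pt_lim (fun s => pds l f s x y) t a) /\
     (exists a, derivable_pt_lim (fun s => pds l f t s y) x a) /\
     (exists a, derivable_pt_lim (fun s => pds l f t x s) y a).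

Definition lap (f : field) : field :=
  fun t x y => pds (1%nat :: 1%nat :: nil) f t x y + pds (2%nat :: 2%nat :: nil) f t x y.

Definition open2 (O : R -> R -> Prop) : Prop :=
  forall x y, O x y -> exists r, r > 0 /\
    forall x' y', (x' - x) ^ 2 + (y' - y) ^ 2 < r ^ 2 -> O x' y'.

Definition bounded2 (O : R -> R -> Prop) : Prop :=
  exists M, forall x y, O x y -> x ^ 2 + y ^ 2 <= M.

Definition path_connected2 (O : R -> R -> Prop) : Prop :=
  (exists x y, O x y) /\
  forall a1 a2 b1 b2, O a1 a2 -> O b1 b2 ->
    exists p1 p2 : R -> R, continuity p1 /\ continuity p2 /\
      p1 0 = a1 /\ p2 0 = a2 /\ p1 1 = b1 /\ p2 1 = b2 /\
      forall s, 0 <= s <= 1 -> O (p1 s) (p2 s).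

Definition closure2 (O : R -> R -> Prop) (x y : R) : Prop :=
  forall r, r > 0 -> exists x' y', O x' y' /\ (x' - x) ^ 2 + (y' - y) ^ 2 < r ^ 2.

Definition boundary2 (O : R -> R -> Prop) (x y : R) : Prop :=
  closure2 O x y /\ ~ O x y.

Definition closed_curve (c1 c2 : R -> R) (L : R) : Prop :=
  L > 0 /\ smooth1 c1 /\ smooth1 c2 /\
  (forall s, c1 (s + L) = c1 s /\ c2 (s + L) = c2 s) /\
  (forall s s', 0 <= s < L -> 0 <= s' < L -> c1 s = c1 s' -> c2 s = c2 s' -> s = s') /\
  (forall s, derive c1 s <> 0 \/ derive c2 s <> 0).

(* Smooth bounded domain Omega whose boundary is the disjoint union of the
   N+1 curves Gamma_i = image of (c1 i, c2 i), i = 0..N; Gamma_0 = Gamma is the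
   outer component.  epsn i in {1,-1} fixes the outward normal:
   n = epsn i * (c2', -c1')/|c'|  (Omega lies locally on the side of -n),
   and the unit tangent n^perp = (-n_2, n_1) = epsn i * c'/|c'|. *)
Definition smooth_domain (Om : R -> R -> Prop) (N : nat)
    (c1 c2 : nat -> R -> R) (L epsn : nat -> R) : Prop :=
  open2 Om /\ bounded2 Om /\ path_connected2 Om /\
  (forall i, (i <= N)%nat -> closed_curve (c1 i) (c2 i) (L i)) /\
  (forall x y, boundary2 Om x y <->
      exists i s, (i <= N)%nat /\ c1 i s = x /\ c2 i s = y) /\
  (forall i j s s', (i <= N)%nat -> (j <= N)%nat -> i <> j ->
      ~ (c1 i s = c1 j s' /\ c2 i s = c2 j s')) /\
  (forall i, (i <= N)%nat -> (epsn i = 1 \/ epsn i = -1) /\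
     forall s, exists delta, delta > 0 /\ forall h, 0 < h < delta ->
       let n1 := epsn i * derive (c2 i) s in
       let n2 := - epsn i * derive (c1 i) s in
       ~ Om (c1 i s + h * n1) (c2 i s + h * n2) /\
       Om (c1 i s - h * n1) (c2 i s - h * n2)) /\
  (* Gamma_0 is the outer component: each of its points can be joined to
     infinity by a path avoiding the closure of Omega *)
  (forall s, exists p1 p2 : R -> R, continuity p1 /\ continuity p2 /\
      p1 0 = c1 O s /\ p2 0 = c2 O s /\
      (forall tau, 0 < tau -> ~ closure2 Om (p1 tau) (p2 tau)) /\
      (forall M, exists tau, 0 < tau /\ (p1 tau) ^ 2 + (p2 tau) ^ 2 > M)).

(* Circulation of (v1,v2) at time t on Gamma_i:  int_{Gamma_i} v . n^perp ds *)
Definition circulation (v1 v2 : field) (c1 c2 : nat -> R -> R) (L epsn : nat -> R)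
    (i : nat) (t : R) : R :=
  epsn i * Rint (fun s => v1 t (c1 i s) (c2 i s) * derive (c1 i) s
                        + v2 t (c1 i s) (c2 i s) * derive (c2 i) s) 0 (L i).

Definition alpha_euler_dirichlet (alpha T : R) (Om : R -> R -> Prop) (N : nat)
    (c1 c2 : nat -> R -> R) (u1 u2 p : field) : Prop :=
  let v1 : field := fun t x y => u1 t x y - alpha * lap u1 t x y in
  let v2 : field := fun t x y => u2 t x y - alpha * lap u2 t x y in
  (forall t x y, 0 <= t < T -> Om x y ->
     pd 0 v1 t x y + u1 t x y * pd 1 v1 t x y + u2 t x y * pd 2 v1 t x y
       + (v1 t x y * pd 1 u1 t x y + v2 t x y * pd 1 u2 t x y) = - pd 1 p t x y /\
     pd 0 v2 t x y + u1 t x y * pd 1 v2 t x y + u2 t x y * pd 2 v2 t x y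
       + (v1 t x y * pd 2 u1 t x y + v2 t x y * pd 2 u2 t x y) = - pd 2 p t x y /\
     pd 1 u1 t x y + pd 2 u2 t x y = 0) /\
  (forall t i s, 0 <= t < T -> (i <= N)%nat ->
     u1 t (c1 i s) (c2 i s) = 0 /\ u2 t (c1 i s) (c2 i s) = 0).

(* Main.v *)
From Stdlib Require Import Reals Lra Lia List ClassicalEpsilon FunctionalExtensionality.
From Coquelicot Require Import Coquelicot.
Require Import Defs.
Open Scope R_scope.

Lemma derive_eq g a l : derivable_pt_lim g a l -> derive g a = l.
Proof.
  intro H. unfold derive.
  assert (E : exists l, derivable_pt_lim g a l) by eauto.
  pose proof (epsilon_spec (inhabits 0) _ E) as H2.
  eapply uniqueness_limite; eauto.
Qed.

Lemma derive_spec g a : (exists l, derivable_pt_lim g a l) -> derivable_pt_lim g a (derive g a).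
Proof. intros [l H]. rewrite (derive_eq _ _ _ H). exact H. Qed.

Lemma sm_t F l t x y : smooth3 F ->
  derivable_pt_lim (fun s => pds l F s x y) t (pds (0%nat :: l) F t x y).
Proof. intros H. destruct (H l) as [_ H1]. destruct (H1 t x y) as [A _].
  simpl. unfold pd. apply derive_spec; auto. Qed.
Lemma sm_x F l t x y : smooth3 F ->
  derivable_pt_lim (fun s => pds l F t s y) x (pds (1%nat :: l) F t x y).
Proof. intros H. destruct (H l) as [_ H1]. destruct (H1 t x y) as [_ [A _]].
  simpl. unfold pd. apply derive_spec; auto. Qed.
Lemma sm_y F l t x y : smooth3 F ->
  derivable_pt_lim (fun s => pds l F t x s) y (pds (2%nat :: l) F t x y).
Proof. intros H. destruct (H l) as [_ H1]. destruct (H1 t x y) as [_ [_ A]].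
  simpl. unfold pd. apply derive_spec; auto. Qed.

Lemma abs_sq d r : r > 0 -> d ^ 2 < r ^ 2 -> Rabs d < r.
Proof. intros Hr H. destruct (Rle_or_lt r (Rabs d)) as [H1|H1]; auto.
  exfalso. assert (r*r <= Rabs d * Rabs d) by nra.
  rewrite <- Rabs_mult, Rabs_right in H0 by nra. nra. Qed.

Lemma c3_2d f t x y : continuous3 f -> continuity_2d_pt (f t) x y.
Proof.
  intros H eps. destruct (H t x y eps (cond_pos eps)) as [d [Hd H2]].
  exists (mkposreal d Hd). intros u v Hu Hv. apply H2; simpl; auto.
  unfold Rminus; rewrite Rplus_opp_r, Rabs_R0; auto.
Qed.

Lemma c3_curve f a b t s : continuous3 f -> continuity_pt a s -> continuity_pt b s ->
  continuity_2d_pt (fun u r => f u (a r) (b r)) t s.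
Proof.
  intros H Ha Hb eps. destruct (H t (a s) (b s) eps (cond_pos eps)) as [d [Hd H2]].
  destruct (Ha d Hd) as [d1 [Hd1 H3]]. destruct (Hb d Hd) as [d2 [Hd2 H4]].
  assert (Hm : 0 < Rmin d (Rmin d1 d2)) by (repeat apply Rmin_pos; auto).
  exists (mkposreal _ Hm). simpl. intros u r Hu Hr.
  assert (Hr1 : Rabs (r - s) < d1) by (eapply Rlt_le_trans; [exact Hr|];
     eapply Rle_trans; [apply Rmin_r| apply Rmin_l]).
  assert (Hr2 : Rabs (r - s) < d2) by (eapply Rlt_le_trans; [exact Hr|];
     eapply Rle_trans; [apply Rmin_r| apply Rmin_r]).
  assert (Hu1 : Rabs (u - t) < d) by (eapply Rlt_le_trans; [exact Hu| apply Rmin_l]).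
  apply H2; auto.
  - destruct (Req_dec r s) as [->|Hne]. unfold Rminus; rewrite Rplus_opp_r, Rabs_R0; auto.
    apply H3. split. split; [exact I| auto]. simpl; unfold R_dist; auto.
  - destruct (Req_dec r s) as [->|Hne]. unfold Rminus; rewrite Rplus_opp_r, Rabs_R0; auto.
    apply H4. split. split; [exact I| auto]. simpl; unfold R_dist; auto.
Qed.

Lemma c2d_snd g x y : continuity_2d_pt g x y -> continuity_pt (g x) y.
Proof.
  intros H eps He. destruct (H (mkposreal eps He)) as [d Hd].
  exists d. split. apply cond_pos. intros z [_ Hz]. simpl in *. unfold R_dist in *.
  apply Hd; auto. unfold Rminus; rewrite Rplus_opp_r, Rabs_R0; apply cond_pos.
Qed.

Lemma mvt_any f f' p q : (forall c, derivable_pt_lim f c (f' c)) ->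
  exists c, f q - f p = f' c * (q - p) /\ Rabs (c - p) <= Rabs (q - p).
Proof.
  intros H. destruct (Rtotal_order p q) as [Hl|[He|Hg]].
  - destruct (MVT_cor2 f f' p q Hl (fun c _ => H c)) as [c [E Hc]].
    exists c. split; auto. rewrite !Rabs_right by lra. lra.
  - subst. exists q. split. ring. unfold Rminus; rewrite Rplus_opp_r, Rabs_R0; lra.
  - destruct (MVT_cor2 f f' q p Hg (fun c _ => H c)) as [c [E Hc]].
    exists c. split. lra. rewrite !Rabs_left1 by lra. lra.
Qed.

Lemma diff2 (g gx : R -> R -> R) gy0 x0 y0 :
 (forall x y, derivable_pt_lim (fun z => g z y) x (gx x y)) ->
 derivable_pt_lim (fun z => g x0 z) y0 gy0 ->
 continuity_2d_pt gx x0 y0 ->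
 differentiable_pt_lim g x0 y0 (gx x0 y0) gy0.
Proof.
  intros Hx Hy Hc eps.
  assert (He2 : 0 < eps / 2) by (destruct eps; simpl; lra).
  destruct (Hc (mkposreal _ He2)) as [d1 Hd1].
  destruct (Hy _ He2) as [d2 Hd2].
  assert (Hm : 0 < Rmin d1 d2) by (apply Rmin_pos; apply cond_pos).
  exists (mkposreal _ Hm). simpl. intros u v Hu Hv.
  assert (Hu1 : Rabs (u - x0) < d1) by (eapply Rlt_le_trans; [exact Hu| apply Rmin_l]).
  assert (Hv1 : Rabs (v - y0) < d1) by (eapply Rlt_le_trans; [exact Hv| apply Rmin_l]).
  assert (Hv2 : Rabs (v - y0) < d2) by (eapply Rlt_le_trans; [exact Hv| apply Rmin_r]).
  destruct (mvt_any (fun z => g z v) (fun z => gx z v) x0 u (fun c => Hx c v)) as [c [Ec Hcb]].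
  simpl in Ec.
  assert (HA : Rabs (gx c v - gx x0 y0) < eps/2) by (apply Hd1; lra).
  assert (HB : Rabs (g x0 v - g x0 y0 - gy0 * (v - y0)) <= eps/2 * Rabs (v - y0)).
  { destruct (Req_dec v y0) as [->|Hne].
    - replace (g x0 y0 - g x0 y0 - gy0 * (y0 - y0)) with 0 by ring. rewrite Rminus_diag, Rabs_R0. lra.
    - assert (Hh : v - y0 <> 0) by lra.
      specialize (Hd2 (v - y0) Hh Hv2). replace (y0 + (v - y0)) with v in Hd2 by ring.
      replace (g x0 v - g x0 y0 - gy0 * (v - y0)) with
        (((g x0 v - g x0 y0) / (v - y0) - gy0) * (v - y0)) by (field; auto).
      rewrite Rabs_mult. apply Rmult_le_compat_r. apply Rabs_pos. lra. }
  replace (g u v - g x0 y0 - (gx x0 y0 * (u - x0) + gy0 * (v - y0))) with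
    ((gx c v - gx x0 y0) * (u - x0) + (g x0 v - g x0 y0 - gy0 * (v - y0))) by lra.
  eapply Rle_trans. apply Rabs_triang. rewrite Rabs_mult.
  assert (M1 := Rmax_l (Rabs (u - x0)) (Rabs (v - y0))).
  assert (M2 := Rmax_r (Rabs (u - x0)) (Rabs (v - y0))).
  assert (0 <= Rabs (u - x0)) by apply Rabs_pos.
  assert (0 <= Rabs (v - y0)) by apply Rabs_pos.
  destruct eps as [e ep]; simpl in *. nra.
Qed.

Lemma chain F t a b s a' b' : smooth3 F -> derivable_pt_lim a s a' -> derivable_pt_lim b s b' ->
  derivable_pt_lim (fun r => F t (a r) (b r)) s
   (pds (1%nat :: nil) F t (a s) (b s) * a' + pds (2%nat :: nil) F t (a s) (b s) * b').
Proof.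
  intros HF Ha Hb. apply derivable_pt_lim_comp_2d; auto.
  apply diff2.
  - intros x y. exact (sm_x F nil t x y HF).
  - exact (sm_y F nil t (a s) (b s) HF).
  - apply c3_2d. apply (HF (1%nat :: nil)).
Qed.

Definition vf alpha F : field := fun t x y => F t x y - alpha * lap F t x y.
Definition dvf alpha k F : field := fun t x y =>
  pds (k :: nil) F t x y - alpha * (pds (k :: 1 :: 1 :: nil)%nat F t x y + pds (k :: 2 :: 2 :: nil)%nat F t x y).

Lemma v_t alpha F t x y : smooth3 F ->
  derivable_pt_lim (fun s => vf alpha F s x y) t (dvf alpha 0 F t x y).
Proof.
  intros HF.
  exact (derivable_pt_lim_minus _ _ _ _ _ (sm_t F nil t x y HF)
    (derivable_pt_lim_scal _ _ _ _ (derivable_pt_lim_plus _ _ _ _ _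
       (sm_t F (1::1::nil)%nat t x y HF) (sm_t F (2::2::nil)%nat t x y HF)))).
Qed.
Lemma v_x alpha F t x y : smooth3 F ->
  derivable_pt_lim (fun s => vf alpha F t s y) x (dvf alpha 1 F t x y).
Proof.
  intros HF.
  exact (derivable_pt_lim_minus _ _ _ _ _ (sm_x F nil t x y HF)
    (derivable_pt_lim_scal _ _ _ _ (derivable_pt_lim_plus _ _ _ _ _
       (sm_x F (1::1::nil)%nat t x y HF) (sm_x F (2::2::nil)%nat t x y HF)))).
Qed.
Lemma v_y alpha F t x y : smooth3 F ->
  derivable_pt_lim (fun s => vf alpha F t x s) y (dvf alpha 2 F t x y).
Proof.
  intros HF.
  exact (derivable_pt_lim_minus _ _ _ _ _ (sm_y F nil t x y HF)
    (derivable_pt_lim_scal _ _ _ _ (derivable_pt_lim_plus _ _ _ _ _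
       (sm_y F (1::1::nil)%nat t x y HF) (sm_y F (2::2::nil)%nat t x y HF)))).
Qed.

Lemma pd_v alpha F k t x y : smooth3 F -> (k <= 2)%nat -> pd k (vf alpha F) t x y = dvf alpha k F t x y.
Proof.
  intros HF Hk. destruct k as [|[|[|k]]].
  - apply derive_eq, v_t; auto.
  - apply derive_eq, v_x; auto.
  - apply derive_eq, v_y; auto.
  - lia.
Qed.

Lemma cont_2d_pds F l t x y : smooth3 F -> continuity_2d_pt (pds l F t) x y.
Proof. intros HF; apply c3_2d, (HF l). Qed.

Lemma dvf_2d alpha k F t x y : smooth3 F -> continuity_2d_pt (dvf alpha k F t) x y.
Proof.
  intros HF. unfold dvf. apply continuity_2d_pt_minus. apply cont_2d_pds; auto.
  apply continuity_2d_pt_mult. apply continuity_2d_pt_const.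
  apply continuity_2d_pt_plus; apply cont_2d_pds; auto.
Qed.

Lemma vf_2d alpha F t x y : smooth3 F -> continuity_2d_pt (vf alpha F t) x y.
Proof.
  intros HF. unfold vf, lap. apply continuity_2d_pt_minus. apply (cont_2d_pds F nil); auto.
  apply continuity_2d_pt_mult. apply continuity_2d_pt_const.
  apply continuity_2d_pt_plus; apply cont_2d_pds; auto.
Qed.

Lemma ext_bd (Om : R -> R -> Prop) E X Y : continuity_2d_pt E X Y -> closure2 Om X Y ->
  (forall x y, Om x y -> E x y = 0) -> E X Y = 0.
Proof.
  intros Hc Hcl HE. destruct (Req_dec (E X Y) 0) as [H|H]; auto. exfalso.
  assert (Hp : 0 < Rabs (E X Y)) by (apply Rabs_pos_lt; auto).
  destruct (Hc (mkposreal _ Hp)) as [d Hd].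
  destruct (Hcl d (cond_pos d)) as [x [y [Hxy Hr]]].
  assert (Hx : Rabs (x - X) < d) by (apply abs_sq; [apply cond_pos| pose proof (pow2_ge_0 (y - Y)); lra]).
  assert (Hy : Rabs (y - Y) < d) by (apply abs_sq; [apply cond_pos| pose proof (pow2_ge_0 (x - X)); lra]).
  specialize (Hd x y Hx Hy). simpl in Hd. rewrite (HE x y Hxy) in Hd.
  rewrite Rminus_0_l, Rabs_Ropp in Hd. lra.
Qed.

Lemma lin2 f g x l1 l2 c1 c2 : derivable_pt_lim f x l1 -> derivable_pt_lim g x l2 ->
  derivable_pt_lim (fun z => f z * c1 + g z * c2) x (l1 * c1 + l2 * c2).
Proof.
  intros Hf Hg.
  pose proof (derivable_pt_lim_plus _ _ _ _ _
     (derivable_pt_lim_mult _ _ _ _ _ Hf (derivable_pt_lim_const c1 x))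
     (derivable_pt_lim_mult _ _ _ _ _ Hg (derivable_pt_lim_const c2 x))) as H.
  replace (l1 * c1 + l2 * c2) with (l1 * fct_cte c1 x + f x * 0 + (l2 * fct_cte c2 x + g x * 0))
    by (unfold fct_cte; ring).
  exact H.
Qed.

Lemma sm1_d a s : smooth1 a -> derivable_pt_lim a s (derive a s).
Proof. intros H. apply derive_spec. exact (H 0%nat s). Qed.
Lemma sm1_c a s : smooth1 a -> continuity_pt (derive a) s.
Proof. intros H. destruct (H 1%nat s) as [l Hl]. apply derivable_continuous_pt.
  exists l. exact Hl. Qed.
Lemma sm1_c0 a s : smooth1 a -> continuity_pt a s.
Proof. intros H. apply derivable_continuous_pt. exists (derive a s). apply sm1_d; auto. Qed.

Lemma Rint_RInt f a b : ex_RInt f a b -> Rint f a b = RInt f a b.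
Proof.
  intros H. unfold Rint. pose proof (ex_RInt_Reals_0 _ _ _ H) as pr.
  assert (E : exists I, exists pr : Riemann_integrable f a b, RiemannInt pr = I) by (exists (RiemannInt pr); exists pr; reflexivity).
  destruct (epsilon_spec (inhabits 0) _ E) as [pr2 H2]. rewrite <- H2.
  symmetry. apply RInt_Reals.
Qed.

Lemma curve_2d F l a b t s : smooth3 F -> smooth1 a -> smooth1 b ->
  continuity_2d_pt (fun u r => pds l F u (a r) (b r)) t s.
Proof. intros HF Ha Hb. apply c3_curve. apply (HF l). apply sm1_c0; auto. apply sm1_c0; auto. Qed.

Lemma dvf_curve alpha k F a b t s : smooth3 F -> smooth1 a -> smooth1 b ->
  continuity_2d_pt (fun u r => dvf alpha k F u (a r) (b r)) t s.
Proof.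
  intros HF Ha Hb. unfold dvf. apply continuity_2d_pt_minus. apply curve_2d; auto.
  apply continuity_2d_pt_mult. apply continuity_2d_pt_const.
  apply continuity_2d_pt_plus; apply curve_2d; auto.
Qed.

Lemma vf_curve alpha F a b t s : smooth3 F -> smooth1 a -> smooth1 b ->
  continuity_2d_pt (fun u r => vf alpha F u (a r) (b r)) t s.
Proof.
  intros HF Ha Hb. unfold vf, lap. apply continuity_2d_pt_minus. apply (curve_2d F nil); auto.
  apply continuity_2d_pt_mult. apply continuity_2d_pt_const.
  apply continuity_2d_pt_plus; apply curve_2d; auto.
Qed.

Lemma da_2d a t s : smooth1 a -> continuity_2d_pt (fun _ r => derive a r) t s.
Proof. intros Ha. apply (continuity_1d_2d_pt_comp (derive a) (fun _ r => r)).
  apply sm1_c; auto. apply continuity_2d_pt_id2. Qed.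

Theorem lemma2p3 (alpha T : R) (Om : R -> R -> Prop) (N : nat)
    (c1 c2 : nat -> R -> R) (L epsn : nat -> R) (u1 u2 p : field) :
  alpha > 0 -> T > 0 ->
  smooth_domain Om N c1 c2 L epsn ->
  smooth3 u1 -> smooth3 u2 -> smooth3 p ->
  alpha_euler_dirichlet alpha T Om N c1 c2 u1 u2 p ->
  forall i, (1 <= i <= N)%nat ->
  forall t1 t2, 0 <= t1 < T -> 0 <= t2 < T ->
    circulation (fun t x y => u1 t x y - alpha * lap u1 t x y)
                (fun t x y => u2 t x y - alpha * lap u2 t x y) c1 c2 L epsn i t1
  = circulation (fun t x y => u1 t x y - alpha * lap u1 t x y)
                (fun t x y => u2 t x y - alpha * lap u2 t x y) c1 c2 L epsn i t2.
Proof.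
  intros Halpha HT Hdom Hu1 Hu2 Hp Heq i Hi t1 t2 Ht1 Ht2.
  destruct Hdom as [_ [_ [_ [Hcurv [Hbdry _]]]]].
  assert (HiN : (i <= N)%nat) by lia.
  destruct (Hcurv i HiN) as [HL [Ha [Hb [Hper _]]]].
  destruct Heq as [HE HD].
  set (a := c1 i) in *. set (b := c2 i) in *. set (Li := L i) in *.
  set (G := fun u s => vf alpha u1 u (a s) (b s) * derive a s + vf alpha u2 u (a s) (b s) * derive b s).
  set (DG := fun u s => dvf alpha 0 u1 u (a s) (b s) * derive a s + dvf alpha 0 u2 u (a s) (b s) * derive b s).
  assert (cG : forall u s, continuity_2d_pt G u s).
  { intros u s. unfold G. apply continuity_2d_pt_plus; apply continuity_2d_pt_mult;
    try apply vf_curve; try apply da_2d; auto. }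
  assert (cDG : forall u s, continuity_2d_pt DG u s).
  { intros u s. unfold DG. apply continuity_2d_pt_plus; apply continuity_2d_pt_mult;
    try apply dvf_curve; try apply da_2d; auto. }
  assert (exG : forall u, ex_RInt (G u) 0 Li).
  { intros u. apply (@ex_RInt_continuous R_CompleteNormedModule). intros z _.
    apply continuity_pt_filterlim. apply c2d_snd. apply cG. }
  assert (dG : forall u s, derivable_pt_lim (fun z => G z s) u (DG u s)).
  { intros u s. unfold G, DG. apply lin2; apply v_t; auto. }
  assert (Claim2 : forall u, is_derive (fun u => RInt (G u) 0 Li) u (RInt (DG u) 0 Li)).
  { intros u.
    assert (HDer : forall x s, Derive (fun z => G z s) x = DG x s).
    { intros x s. apply is_derive_unique. apply is_derive_Reals. apply dG. }
    assert (E : RInt (DG u) 0 Li = RInt (fun t => Derive (fun z => G z t) u) 0 Li).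
    { apply RInt_ext. intros; rewrite HDer; auto. }
    rewrite E. apply is_derive_RInt_param.
    - apply filter_forall. intros x s _. exists (DG x s). apply is_derive_Reals. apply dG.
    - intros s _. eapply continuity_2d_pt_ext; [|apply (cDG u s)].
      intros; simpl; rewrite HDer; auto.
    - apply filter_forall. intros x. apply exG. }
  assert (Claim3 : forall u, 0 <= u < T -> RInt (DG u) 0 Li = 0).
  { intros u Hu.
    set (P := fun s => p u (a s) (b s)).
    set (dP := fun s => pds (1%nat :: nil) p u (a s) (b s) * derive a s
                       + pds (2%nat :: nil) p u (a s) (b s) * derive b s).
    assert (HdP : forall s, derivable_pt_lim P s (dP s)).
    { intros s. apply chain; auto; apply sm1_d; auto. }
    assert (Hpt : forall s, DG u s = - dP s).
    { intros s. set (X := a s). set (Y := b s).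
      assert (Hcl : closure2 Om X Y).
      { apply (proj2 (Hbdry X Y)). exists i, s. auto. }
      assert (Z1 : forall r, u1 u (a r) (b r) = 0) by (intro r; apply (HD u i r Hu HiN)).
      assert (Z2 : forall r, u2 u (a r) (b r) = 0) by (intro r; apply (HD u i r Hu HiN)).
      assert (E21 : pds (1%nat :: nil) u1 u X Y * derive a s + pds (2%nat :: nil) u1 u X Y * derive b s = 0).
      { eapply uniqueness_limite. apply chain; auto; apply sm1_d; auto.
        replace (fun r => u1 u (a r) (b r)) with (fun _ : R => 0).
        apply derivable_pt_lim_const.
        apply functional_extensionality. intros r; rewrite Z1; auto. }
      assert (E22 : pds (1%nat :: nil) u2 u X Y * derive a s + pds (2%nat :: nil) u2 u X Y * derive b s = 0).
      { eapply uniqueness_limite. apply chain; auto; apply sm1_d; auto.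
        replace (fun r => u2 u (a r) (b r)) with (fun _ : R => 0).
        apply derivable_pt_lim_const.
        apply functional_extensionality. intros r; rewrite Z2; auto. }
      assert (E31 : dvf alpha 0 u1 u X Y + u1 u X Y * dvf alpha 1 u1 u X Y + u2 u X Y * dvf alpha 2 u1 u X Y
          + (vf alpha u1 u X Y * pds (1%nat :: nil) u1 u X Y + vf alpha u2 u X Y * pds (1%nat :: nil) u2 u X Y)
          + pds (1%nat :: nil) p u X Y = 0).
      { apply (ext_bd Om (fun x y => dvf alpha 0 u1 u x y + u1 u x y * dvf alpha 1 u1 u x y + u2 u x y * dvf alpha 2 u1 u x y
          + (vf alpha u1 u x y * pds (1%nat :: nil) u1 u x y + vf alpha u2 u x y * pds (1%nat :: nil) u2 u x y)
          + pds (1%nat :: nil) p u x y)); auto.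
        - repeat first [ apply dvf_2d; auto | apply vf_2d; auto | apply (cont_2d_pds _ nil); auto
             | apply cont_2d_pds; auto | apply continuity_2d_pt_plus | apply continuity_2d_pt_mult].
        - intros x y Hxy. destruct (HE u x y Hu Hxy) as [Q1 _].
          change (pd 0 (vf alpha u1) u x y + u1 u x y * pd 1 (vf alpha u1) u x y + u2 u x y * pd 2 (vf alpha u1) u x y
            + (vf alpha u1 u x y * pd 1 u1 u x y + vf alpha u2 u x y * pd 1 u2 u x y) = - pd 1 p u x y) in Q1.
          rewrite !pd_v in Q1 by (auto; lia). cbv beta. cbn [pds]. lra. }
      assert (E32 : dvf alpha 0 u2 u X Y + u1 u X Y * dvf alpha 1 u2 u X Y + u2 u X Y * dvf alpha 2 u2 u X Y
          + (vf alpha u1 u X Y * pds (2%nat :: nil) u1 u X Y + vf alpha u2 u X Y * pds (2%nat :: nil) u2 u X Y)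
          + pds (2%nat :: nil) p u X Y = 0).
      { apply (ext_bd Om (fun x y => dvf alpha 0 u2 u x y + u1 u x y * dvf alpha 1 u2 u x y + u2 u x y * dvf alpha 2 u2 u x y
          + (vf alpha u1 u x y * pds (2%nat :: nil) u1 u x y + vf alpha u2 u x y * pds (2%nat :: nil) u2 u x y)
          + pds (2%nat :: nil) p u x y)); auto.
        - repeat first [ apply dvf_2d; auto | apply vf_2d; auto | apply (cont_2d_pds _ nil); auto
             | apply cont_2d_pds; auto | apply continuity_2d_pt_plus | apply continuity_2d_pt_mult].
        - intros x y Hxy. destruct (HE u x y Hu Hxy) as [_ [Q1 _]].
          change (pd 0 (vf alpha u2) u x y + u1 u x y * pd 1 (vf alpha u2) u x y + u2 u x y * pd 2 (vf alpha u2) u x y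
            + (vf alpha u1 u x y * pd 2 u1 u x y + vf alpha u2 u x y * pd 2 u2 u x y) = - pd 2 p u x y) in Q1.
          rewrite !pd_v in Q1 by (auto; lia). cbv beta. cbn [pds]. lra. }
      unfold DG, dP. fold X Y. assert (ZX1 : u1 u X Y = 0) by apply Z1. assert (ZX2 : u2 u X Y = 0) by apply Z2.
      rewrite ZX1, ZX2 in E31, E32.
      set (A1 := derive a s) in *. set (B1 := derive b s) in *.
      set (V1 := vf alpha u1 u X Y) in *. set (V2 := vf alpha u2 u X Y) in *.
      set (D1 := dvf alpha 0 u1 u X Y) in *. set (D2 := dvf alpha 0 u2 u X Y) in *.
      set (p1 := pds (1%nat :: nil) p u X Y) in *. set (p2 := pds (2%nat :: nil) p u X Y) in *.
      set (a11 := pds (1%nat :: nil) u1 u X Y) in *. set (a12 := pds (2%nat :: nil) u1 u X Y) in *.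
      set (a21 := pds (1%nat :: nil) u2 u X Y) in *. set (a22 := pds (2%nat :: nil) u2 u X Y) in *.
      assert (D1 = - p1 - V1 * a11 - V2 * a21) by lra.
      assert (D2 = - p2 - V1 * a12 - V2 * a22) by lra.
      subst D1 D2. rewrite H, H0.
      transitivity (-(p1 * A1 + p2 * B1) - V1 * (a11 * A1 + a12 * B1) - V2 * (a21 * A1 + a22 * B1)).
      ring. rewrite E21, E22. ring. }
    assert (HR : is_RInt (DG u) 0 Li (minus ((fun s => - P s) Li) ((fun s => - P s) 0))).
    { apply (@is_RInt_derive R_CompleteNormedModule (fun s => - P s) (DG u) 0 Li).
      - intros x _. apply is_derive_Reals. rewrite Hpt.
        apply derivable_pt_lim_opp. apply HdP.
      - intros x _. apply continuity_pt_filterlim. apply c2d_snd. apply cDG. }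
    rewrite (is_RInt_unique _ _ _ _ HR). simpl.
    assert (P Li = P 0).
    { unfold P. destruct (Hper 0) as [E1 E2]. rewrite Rplus_0_l in E1, E2. rewrite E1, E2. auto. }
    rewrite H. unfold minus, plus, opp; simpl. ring. }
  unfold circulation. fold a b Li.
  change (epsn i * Rint (G t1) 0 Li = epsn i * Rint (G t2) 0 Li).
  rewrite !Rint_RInt by apply exG. f_equal.
  set (H := fun u => RInt (G u) 0 Li).
  assert (HH : forall c, derivable_pt_lim H c (RInt (DG c) 0 Li)).
  { intros c. apply is_derive_Reals. apply Claim2. }
  change (H t1 = H t2).
  destruct (Rtotal_order t1 t2) as [Hl|[He|Hg]].
  - destruct (MVT_cor2 H (fun c => RInt (DG c) 0 Li) t1 t2 Hl (fun c _ => HH c)) as [c [Ec Hc]].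
    rewrite Claim3 in Ec by lra. lra.
  - subst; auto.
  - destruct (MVT_cor2 H (fun c => RInt (DG c) 0 Li) t2 t1 Hg (fun c _ => HH c)) as [c [Ec Hc]].
    rewrite Claim3 in Ec by lra. lra.
Qed.
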